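(* \[\sum_{\pi\in\mathcal{C}_2}q^{|\pi|}=\sum_{m\ge0}\frac{q^{\binom{m+1}{2}}}{(q;q)_m}\sum_{j\ge0}q^{\binom j2}{m\brack j}.\]
   Context: An overpartition is a partition in which the first occurrence of each part size may be overlined, with parts listed in non-increasing order with respect to $1<\bar1<2<\bar2<\cdots$. A part is of size $t$ if it is $t$ or $\bar t$, and $|\pi|$ is the sum of the sizes of the parts. $\mathcal{C}_2$ is the set of overpartitions $(\pi_1,\dots,\pi_\ell)$, including the empty one, such that: - for each $1\le i<\ell$, the size of $\pi_i$ minus the size of $\pi_{i+1}$ is at least $1$, and at least $2$ if $\pi_i$ is non-overlined; - at most one part equals the non-overlined part $1$. $(q;q)_n=\prod_{i=1}^n(1-q^i)$. The Gaussian binomial is ${M\brack N}=\frac{(q;q)_M}{(q;q)_N(q;q)_{M-N}}$ for $0\le N\le M$ and $0$ otherwise. *)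

(* Defs.v *)
From mathcomp Require Import all_boot all_order all_algebra.
Set Implicit Arguments. Unset Strict Implicit. Unset Printing Implicit Defensive.
Import Order.TTheory GRing.Theory Num.Theory.
Local Open Scope ring_scope.

Definition fps := nat -> rat.
Definition fadd (f g : fps) : fps := fun n => f n + g n.
Definition fsub (f g : fps) : fps := fun n => f n - g n.
Definition fmul (f g : fps) : fps :=
  fun n => \sum_(k < n.+1) f k * g (n - k)%N.
Definition fzero : fps := fun _ => 0.
Definition fone : fps := fun n => (n == 0%N)%:R.
Definition qpow (k : nat) : fps := fun n => (n == k)%:R.

Fixpoint invseq (f : fps) (n : nat) : seq rat :=
  match n with
  | 0%N => [:: (f 0%N)^-1]
  | n'.+1 => let s := invseq f n' in
      rcons s (- (f 0%N)^-1 * \sum_(k < n'.+1) f k.+1 * nth 0 s (n' - k)%N)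
  end.
Definition finv (f : fps) : fps := fun n => nth 0 (invseq f n) n.

Fixpoint qpoch (n : nat) : fps :=
  match n with
  | 0%N => fone
  | n'.+1 => fmul (qpoch n') (fsub fone (qpow n'.+1))
  end.

Definition gauss (M N : nat) : fps :=
  if (N <= M)%N then fmul (qpoch M) (fmul (finv (qpoch N)) (finv (qpoch (M - N))))
  else fzero.

(* m-th summand of the right-hand side:
   q^{binom(m+1,2)}/(q;q)_m * sum_{j>=0} q^{binom(j,2)} [m brack j]
   (the j-sum is finite since [m brack j] = 0 for j > m) *)
Definition rhs_term (m : nat) : fps :=
  fmul (qpow 'C(m.+1, 2)) (fmul (finv (qpoch m))
    (fun n => \sum_(j < m.+1) fmul (qpow 'C(j, 2)) (gauss m j) n)).

Definition rhs_partial (M : nat) : fps :=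
  fun n => \sum_(m < M.+1) rhs_term m n.

(* a part is (t, b): size t, overlined iff b *)
Definition part := (nat * bool)%type.
(* order 1 < 1bar < 2 < 2bar < ... *)
Definition part_key (p : part) : nat := (2 * p.1 + p.2)%N.
Definition weight (s : seq part) : nat := sumn (map fst s).

(* parts positive, listed in non-increasing order, and for each size at most
   one overlined copy (which, by the ordering, is its first occurrence) *)
Definition is_overpartition (s : seq part) : bool :=
  [&& all (fun p => 0 < p.1)%N s,
      sorted (fun x y => part_key y <= part_key x)%N s &
      all (fun p => count_mem (p.1, true) s <= 1)%N s].

Fixpoint diff_cond (s : seq part) : bool :=
  match s with
  | a :: ((b :: _) as t) => ((b.1 + 1 + ~~ a.2 <= a.1)%N && diff_cond t)
  | _ => true
  end.

Definition inC2 (s : seq part) : bool :=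
  [&& is_overpartition s, diff_cond s & (count_mem (1%N, false) s <= 1)%N].

(* Main.v *)
From HB Require Import structures.
Require Import Defs.
From mathcomp Require Import all_boot all_order all_algebra.
From mathcomp Require Import boolp.
From mathcomp Require Import ring zify.
Import Order.TTheory GRing.Theory Num.Theory.
Set Implicit Arguments. Unset Strict Implicit. Unset Printing Implicit Defensive.

Definition sh (k : nat) (s : seq part) : seq part := map (fun p => (p.1 + k, p.2)%N) s.
Definition ush (k : nat) (s : seq part) : seq part := map (fun p => (p.1 - k, p.2)%N) s.

Fixpoint rvalid (c : nat) (d : bool) (s : seq part) : bool :=
  match s with
  | [::] => true
  | p :: t => (c + (d && ~~ p.2) <= p.1)%N && rvalid p.1.+1 true t
  end.

Lemma rvalid_sh c k d s : rvalid (c + k) d (sh k s) = rvalid c d s.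
Proof.
elim: s c d => //= p t IH c d.
rewrite -addSn IH; congr (_ && _); lia.
Qed.

Lemma rvalid_sh0 k d s : rvalid k d (sh k s) = rvalid 0 d s.
Proof. exact: (rvalid_sh 0 k). Qed.

Lemma size_sh k s : size (sh k s) = size s.
Proof. by rewrite size_map. Qed.

Lemma weight_sh k s : weight (sh k s) = (weight s + k * size s)%N.
Proof. elim: s => [|p t IH] /=; rewrite /weight /= ?muln0 //. 
move: IH; rewrite /weight => ->; lia. Qed.

Lemma sh_inj k : injective (sh k).
Proof. apply: inj_map => [[a b] [a' b']] /= [] H ->; congr (_, _); lia. Qed.

Lemma rvalid_ge c d s : rvalid c d s -> all (fun p => c <= p.1)%N s.
Proof.
elim: s c d => //= p t IH c d /andP [H1 H2].
rewrite (leq_trans (leq_addr _ _) H1) /=.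
apply: sub_all (IH _ _ H2) => q /= Hq; lia.
Qed.

Lemma sh_ush k s : all (fun p => k <= p.1)%N s -> sh k (ush k s) = s.
Proof.
elim: s => //= [[a b] t] IH /andP [/= H1 H2]; rewrite IH //; congr ((_, _) :: _); lia.
Qed.

Lemma size_ush k s : size (ush k s) = size s.
Proof. by rewrite size_map. Qed.

Definition av (d b : bool) : nat := (d && ~~ b)%N.

Definition piece (e : nat) (b : bool) (m n : nat) (L : nat -> seq (seq part)) :=
  if (e + e.+1 * m <= n)%N then map (fun r => (e, b) :: sh e.+1 r) (L (n - (e + e.+1 * m))%N)
  else [::].

Fixpoint E (k m : nat) (d : bool) (n : nat) : seq (seq part) :=
  match m with
  | 0 => if n == 0%N then [:: [::]] else [::]
  | m'.+1 =>
    match k with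
    | 0 => [::]
    | k'.+1 =>
      piece (av d true) true m' n (E k' m' true) ++ piece (av d false) false m' n (E k' m' true) ++
      (if (m <= n)%N then map (sh 1) (E k' m d (n - m)) else [::])
    end
  end.

Lemma E_S k m d n : E k.+1 m.+1 d n =
  piece (av d true) true m n (E k m true) ++ piece (av d false) false m n (E k m true) ++
      (if (m.+1 <= n)%N then map (sh 1) (E k m.+1 d (n - m.+1)) else [::]).
Proof. by []. Qed.

Lemma rvalid_mono c c' d s : (c' <= c)%N -> rvalid c d s -> rvalid c' d s.
Proof. case: s => //= p t H /andP [H1 ->]; rewrite andbT; lia. Qed.

Lemma weight_ge c s : all (fun p => c <= p.1)%N s -> (c * size s <= weight s)%N.
Proof.
elim: s => [|p t IH] /=; first by rewrite muln0.
move=> /andP [H1 /IH]; rewrite /weight /=; lia.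
Qed.

Lemma weight_cons p t : weight (p :: t) = (p.1 + weight t)%N.
Proof. by []. Qed.

Lemma piece_memP k m n e b s :
  (forall r, (r \in E k m true (n - (e + e.+1 * m))) =
     [&& rvalid 0 true r, size r == m & weight r == (n - (e + e.+1 * m))%N]) ->
  (s \in piece e b m n (E k m true)) =
  [&& s == (e, b) :: behead s, rvalid e.+1 true (behead s), size (behead s) == m &
      weight s == n].
Proof.
move=> IH; rewrite /piece; case: ifP => Hc.
  apply/mapP/idP.
    move=> [r]; rewrite IH => /and3P [H1 /eqP H2 /eqP H3] ->.
    rewrite /= eqxx rvalid_sh0 H1 size_sh H2 eqxx weight_cons weight_sh H3 H2 /=.
    apply/eqP; lia.
  case: s => // [[a b'] t] /and4P [/eqP [-> ->] /= H1 /eqP H2 /eqP H3].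
  have Ht := sh_ush (rvalid_ge H1).
  move: (ush e.+1 t) Ht => u Ht; subst t.
  exists u => //.
  move: H1 H2 H3; rewrite IH rvalid_sh0 size_sh weight_cons weight_sh => H1 H2 H3.
  rewrite H1 H2 eqxx /=; apply/eqP; simpl in H3; lia.
rewrite in_nil; case: s => // [[a b'] t].
apply/esym/negP => /and4P [/eqP [-> ->] /= H1 /eqP H2 /eqP H3].
have := weight_ge (rvalid_ge H1); rewrite H2 => H4.
move: H3 Hc; rewrite weight_cons; move=> /= H3 /negbT; rewrite -ltnNge; lia.
Qed.

Lemma shift_memP k m d n s :
  ((m.+1 <= n)%N -> forall r, (r \in E k m.+1 d (n - m.+1)) =
     [&& rvalid 0 d r, size r == m.+1 & weight r == (n - m.+1)%N]) ->
  (s \in (if (m.+1 <= n)%N then map (sh 1) (E k m.+1 d (n - m.+1)) else [::])) =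
  [&& rvalid 1 d s, size s == m.+1 & weight s == n].
Proof.
move=> IH; case: ifP => Hc.
  apply/mapP/idP.
    move=> [r]; rewrite IH // => /and3P [H1 /eqP H2 /eqP H3] ->.
    rewrite rvalid_sh0 H1 size_sh H2 eqxx weight_sh H3 H2 /=.
    apply/eqP; lia.
  move=> /and3P [H1 /eqP H2 /eqP H3].
  have Ht := sh_ush (rvalid_ge H1).
  move: (ush 1 s) Ht => u Ht; subst s.
  exists u => //.
  move: H1 H2 H3; rewrite IH // rvalid_sh0 size_sh weight_sh => H1 H2 H3.
  rewrite H1 H2 eqxx /=; apply/eqP; lia.
rewrite in_nil; apply/esym/negP => /and3P [H1 /eqP H2 /eqP H3].
have := weight_ge (rvalid_ge H1); rewrite H2 => H4.
move: Hc => /negbT; rewrite -ltnNge; lia.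
Qed.

Lemma E_spec k m d n s : (n + m <= k)%N ->
  (s \in E k m d n) = [&& rvalid 0 d s, size s == m & weight s == n].
Proof.
elim: k m d n s => [|k IH] [|m] d n s Hk.
- by case: n {Hk} => [|n]; case: s => [|p t]; rewrite /= ?inE ?andbF.
- by move: Hk; rewrite addnS.
- by case: n {Hk} => [|n]; case: s => [|p t]; rewrite /= ?inE ?andbF.
rewrite E_S !mem_cat.
have Hk' : (n + m <= k)%N by move: Hk; rewrite addnS.
have Hf b : ((n - (av d b + (av d b).+1 * m)) + m <= k)%N.
  by apply: leq_trans Hk'; rewrite leq_add2r leq_subr.
rewrite (piece_memP _ _ (fun r => IH _ _ _ r (Hf true))).
rewrite (piece_memP _ _ (fun r => IH _ _ _ r (Hf false))).
rewrite shift_memP; last by move=> Hn r; apply: IH; lia.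
case: s => [|[a b] t]; first by rewrite /= ?andbF.
rewrite /= !eqseq_cons !xpair_eqE eqSS eqxx !andbT; clear Hf Hk Hk' IH.
case: b; case: d; case: a => [|[|a]]; rewrite /av /= ?andbF ?andbT ?orbF //=.
Qed.

Lemma piece_uniq e b m n L : uniq (L (n - (e + e.+1 * m))%N) -> uniq (piece e b m n L).
Proof.
move=> H; rewrite /piece; case: ifP => // _; rewrite map_inj_uniq //.
by move=> r r' [] /sh_inj.
Qed.

Lemma piece_head e b m n L s : s \in piece e b m n L -> ohead s = Some (e, b).
Proof. by rewrite /piece; case: ifP => // _ /mapP [r _ ->]. Qed.

Lemma E_uniq k m d n : (n + m <= k)%N -> uniq (E k m d n).
Proof.
elim: k m d n => [|k IH] [|m] d n Hk.
- by case: n {Hk}.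
- by move: Hk; rewrite addnS.
- by case: n {Hk}.
have Hk' : (n + m <= k)%N by move: Hk; rewrite addnS.
have Hf b : ((n - (av d b + (av d b).+1 * m)) + m <= k)%N.
  by apply: leq_trans Hk'; rewrite leq_add2r leq_subr.
have HC s : s \in (if (m.+1 <= n)%N then map (sh 1) (E k m.+1 d (n - m.+1)) else [::]) ->
    exists a b t, s = (a.+1, b) :: t /\ (av d b <= a)%N.
  case: ifP => // Hn /mapP [r]; rewrite E_spec; last by lia.
  case: r => [|[a b] t] //= /andP [/andP [H1 _] _] ->.
  by exists a, b, (sh 1 t); split => //; rewrite addn1.
rewrite E_S !cat_uniq !piece_uniq ?IH //.
apply/and3P; split => //; last (apply/and3P; split => //).
- apply/hasPn => s; rewrite mem_cat => /orP [/piece_head Hs|/HC [a [b [t [-> H]]]]];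
    rewrite /= -topredE /=.
    by apply/negP => /piece_head; rewrite Hs.
  apply/negP => /piece_head /= [] Ha Hb; move: H; rewrite Hb; lia.
- apply/hasPn => s /HC [a [b [t [-> H]]]].
  rewrite /= -topredE /=; apply/negP => /piece_head /= [] Ha Hb; move: H; rewrite Hb; lia.
- case: ifP => // Hn; rewrite map_inj_uniq; [apply: IH; lia | exact: sh_inj].
Qed.

Definition cnt m d n := size (E (n + m) m d n).

Lemma E_size k m d n : (n + m <= k)%N -> size (E k m d n) = cnt m d n.
Proof.
move=> H; apply: perm_size; apply: uniq_perm; rewrite ?E_uniq //.
by move=> s; rewrite !E_spec.
Qed.

Lemma cnt0 d n : cnt 0 d n = (n == 0%N).
Proof. by rewrite /cnt /=; case: n. Qed.

Lemma av_true d : av d true = 0%N.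
Proof. by rewrite /av andbF. Qed.

Definition pc m n e := if (e + e.+1 * m <= n)%N then cnt m true (n - (e + e.+1 * m)) else 0%N.

Lemma cnt_rec m d n : cnt m.+1 d n =
  (pc m n (av d true) + pc m n (av d false) +
   (if (m.+1 <= n)%N then cnt m.+1 d (n - m.+1) else 0))%N.
Proof.
rewrite /cnt addnS E_S !size_cat /piece /pc -addnA.
have Hs e : size (if (e + e.+1 * m <= n)%N then
     [seq (e, _) :: sh e.+1 r | r <- E (n + m) m true (n - (e + e.+1 * m))] else [::]) =
     if (e + e.+1 * m <= n)%N then cnt m true (n - (e + e.+1 * m)) else 0%N.
  case: ifP => // _; rewrite size_map E_size //.
  by rewrite leq_add2r leq_subr.
rewrite !Hs; congr (_ + (_ + _))%N.
case: ifP => // Hn; rewrite size_map E_size //; lia.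
Qed.

Lemma diff_sorted s : diff_cond s -> sorted (fun x y : part => (y.1 < x.1)%N) s.
Proof.
elim: s => // a [|b t] IH //= /andP [H1 H2].
move: (IH H2) => /= ->; rewrite andbT; move: H1; case: (~~ a.2) => /=; lia.
Qed.

Lemma cnt_le1 (s : seq part) (x : nat) (b : bool) : uniq (map fst s) -> (count_mem (x, b) s <= 1)%N.
Proof.
move=> U; apply: (@leq_trans (count_mem x (map fst s))).
  rewrite count_map; apply: sub_count => p /= /eqP -> //.
by rewrite count_uniq_mem // leq_b1.
Qed.

Lemma inC2_fv s : inC2 s = all (fun p => 0 < p.1)%N s && diff_cond s.
Proof.
rewrite /inC2 /is_overpartition; apply/idP/idP.
  by case/and3P => /and3P [-> _ _] -> _.
case/andP => Hp Hd.
have Hs := diff_sorted Hd.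
have U : uniq (map fst s).
  apply: (@sorted_uniq _ (fun x y : nat => (y < x)%N)).
  - move=> x y z /= H1 H2; lia.
  - by move=> x; rewrite /= ltnn.
  by rewrite sorted_map.
rewrite Hp Hd /= cnt_le1 // andbT; apply/andP; split.
  by apply: sub_sorted Hs => x y /=; rewrite /part_key; case: x.2; case: y.2 => /=; lia.
by apply/allP => p _; apply: cnt_le1.
Qed.

Lemma rvalid_rcons c d s p : rvalid c d (rcons s p) = rvalid c d s &&
  (if s is [::] then (c + (d && ~~ p.2) <= p.1)%N else ((last p s).1.+1 + ~~ p.2 <= p.1)%N).
Proof.
elim: s c d => [|x s IH] c d /=; first by rewrite andbT.
rewrite IH; case: s {IH} => [|y s] /=; first by rewrite andbT.
by rewrite andbA.
Qed.

Lemma inC2_rev s : inC2 s = rvalid 1 false (rev s).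
Proof.
rewrite inC2_fv; elim: s => // p t IH.
rewrite rev_cons rvalid_rcons -IH.
case: t IH => [|q t] IH /=; first by rewrite !andbT.
rewrite rev_cons; case: (rev t) => [|r rs] /=; rewrite ?last_rcons /=.
- rewrite addn1; case H: (q.1.+1 + ~~ p.2 <= p.1)%N; rewrite ?andbF ?andbT //.
  have Hp : (0 < p.1)%N by move: H; case: (~~ p.2) => /=; lia.
  by rewrite Hp.
- rewrite addn1; case H: (q.1.+1 + ~~ p.2 <= p.1)%N; rewrite ?andbF ?andbT //.
  have Hp : (0 < p.1)%N by move: H; case: (~~ p.2) => /=; lia.
  by rewrite Hp.
Qed.

Local Open Scope ring_scope.

Notation finv := Defs.finv.
Notation F := fps.
HB.instance Definition _ := gen_eqMixin F.
HB.instance Definition _ := gen_choiceMixin F.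

Lemma fext (f g : fps) : (forall n, f n = g n) -> f = g.
Proof. move=> H; apply: funext => n; exact: H. Qed.

Definition fopp (f : fps) : fps := fun n => - f n.

Lemma faddA : associative (fadd : F -> F -> F).
Proof. by move=> f g h; apply: fext => n; rewrite /fadd addrA. Qed.
Lemma faddC : commutative (fadd : F -> F -> F).
Proof. by move=> f g; apply: fext => n; rewrite /fadd addrC. Qed.
Lemma fadd0 : left_id (fzero : F) fadd.
Proof. by move=> f; apply: fext => n; rewrite /fadd /fzero add0r. Qed.
Lemma faddN : left_inverse (fzero : F) fopp fadd.
Proof. by move=> f; apply: fext => n; rewrite /fadd /fopp /fzero addNr. Qed.

HB.instance Definition _ := GRing.isZmodule.Build F faddA faddC fadd0 faddN.

Definition tr (f : fps) (n : nat) : {poly rat} := \poly_(i < n.+1) f i.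
Lemma tr_coef f n i : (i <= n)%N -> (tr f n)`_i = f i.
Proof. by move=> H; rewrite /tr coef_poly ltnS H. Qed.

Lemma fmulP (f g : fps) n (p q : {poly rat}) :
  (forall i, (i <= n)%N -> p`_i = f i) -> (forall i, (i <= n)%N -> q`_i = g i) ->
  fmul f g n = (p * q)`_n.
Proof.
move=> Hp Hq; rewrite coefM /fmul; apply: eq_bigr => i _.
by rewrite Hp ?Hq // ?leq_subr // -ltnS.
Qed.

Lemma fmulT f g n i : (i <= n)%N -> fmul f g i = (tr f n * tr g n)`_i.
Proof.
move=> H; apply: fmulP => j Hj; apply: tr_coef; exact: leq_trans Hj H.
Qed.

Lemma fmulA : associative (fmul : F -> F -> F).
Proof.
move=> f g h; apply: fext => n.
rewrite (@fmulP f (fmul g h) n (tr f n) (tr g n * tr h n)); last first.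
- by move=> i Hi; rewrite -fmulT.
- by move=> i Hi; rewrite tr_coef.
rewrite (@fmulP (fmul f g) h n (tr f n * tr g n) (tr h n)); last first.
- by move=> i Hi; rewrite tr_coef.
- by move=> i Hi; rewrite -fmulT.
by rewrite mulrA.
Qed.

Lemma fmulC : commutative (fmul : F -> F -> F).
Proof.
move=> f g; apply: fext => n; rewrite (fmulT f g (leqnn n)) (fmulT g f (leqnn n)).
by rewrite mulrC.
Qed.

Lemma fmul1 : left_id (fone : F) fmul.
Proof.
move=> f; apply: fext => n.
rewrite (@fmulP fone f n 1 (tr f n)); first by rewrite mul1r tr_coef.
  by move=> i Hi; rewrite coef1 /fone.
by move=> i Hi; rewrite tr_coef.
Qed.

Lemma fmulDl : left_distributive (fmul : F -> F -> F) fadd.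
Proof.
move=> f g h; apply: fext => n.
by rewrite /fmul /fadd -big_split /=; apply: eq_bigr => i _; rewrite mulrDl.
Qed.

Lemma fone_neq0 : (fone : F) != fzero.
Proof.
apply/eqP => H; have := congr1 (fun f : fps => f 0%N) H.
by rewrite /fone /fzero /=; move/eqP; rewrite oner_eq0.
Qed.

HB.instance Definition _ := GRing.Zmodule_isComNzRing.Build F fmulA fmulC fmul1 fmulDl fone_neq0.

Lemma fmulE (f g : fps) : fmul f g = ((f : F) * (g : F)). Proof. by []. Qed.
Lemma faddE (f g : fps) : fadd f g = ((f : F) + (g : F)). Proof. by []. Qed.
Lemma foneE : fone = (1 : F). Proof. by []. Qed.
Lemma fsubE (f g : fps) : fsub f g = ((f : F) - (g : F)). Proof. by []. Qed.



Lemma sumF (I : Type) (r : seq I) (P : pred I) (f : I -> F) n :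
  (\sum_(i <- r | P i) f i) n = \sum_(i <- r | P i) f i n.
Proof. by elim/big_rec2: _ => // i x y _ <-. Qed.

Lemma qpowM_coef a (f : F) n :
  ((qpow a : F) * f) n = if (a <= n)%N then f (n - a)%N else 0.
Proof.
rewrite -fmulE (@fmulP (qpow a) f n 'X^a (tr f n)); last first.
- by move=> i Hi; rewrite tr_coef.
- by move=> i Hi; rewrite coefXn /qpow.
rewrite coefXnM ltnNge; case: leqP => // H.
by rewrite tr_coef // leq_subr.
Qed.

Lemma qpowD a b : (qpow (a + b) : F) = (qpow a : F) * (qpow b : F).
Proof.
apply: fext => n; rewrite qpowM_coef /qpow.
case: leqP => H.
  by have -> : (n - a == b)%N = (n == a + b)%N by apply/eqP/eqP; lia.
by have -> : (n == a + b)%N = false by apply/eqP; lia.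
Qed.

Lemma qpow0 : (qpow 0 : F) = 1.
Proof. by []. Qed.

Lemma fmul0 (f g : fps) : fmul f g 0%N = f 0%N * g 0%N.
Proof. by rewrite /fmul big_ord1. Qed.

Lemma size_invseq f n : size (invseq f n) = n.+1.
Proof. by elim: n => //= n IH; rewrite size_rcons IH. Qed.

Lemma nth_invseq f n i : (i <= n)%N -> nth 0 (invseq f n) i = finv f i.
Proof.
elim: n => [|n IH]; first by rewrite leqn0 => /eqP ->.
rewrite leq_eqVlt => /orP [/eqP -> //|Hi].
by rewrite /= nth_rcons size_invseq Hi IH.
Qed.

Lemma finvS f n : finv f n.+1 =
  - (f 0%N)^-1 * \sum_(k < n.+1) f k.+1 * finv f (n - k)%N.
Proof.
rewrite /finv /= nth_rcons size_invseq ltnn eqxx; congr (_ * _).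
by apply: eq_bigr => k _; rewrite nth_invseq // leq_subr.
Qed.

Lemma finvK (f : F) : f 0%N != 0 -> (finv f : F) * f = 1.
Proof.
move=> Hf; rewrite mulrC; apply: fext => n; rewrite -fmulE.
case: n => [|n]; first by rewrite fmul0 /finv /= divff.
rewrite /fmul big_ord_recl /= subn0 finvS mulrA mulrN mulrV ?unitfE //.
rewrite mulN1r.
have -> : \sum_(i < n.+1) f (bump 0 i) * finv f (n.+1 - bump 0 i)%N =
          \sum_(k < n.+1) f k.+1 * finv f (n - k)%N by apply: eq_bigr.
by rewrite addNr.
Qed.

Definition A m : F := qpoch m.
Definition I m : F := finv (qpoch m).

Lemma qpoch0 m : qpoch m 0%N = 1.
Proof.
elim: m => //= m IH; rewrite fmul0 IH /fsub /fone /qpow /=.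
by rewrite subr0 mul1r.
Qed.

Lemma IA m : I m * A m = 1.
Proof. by apply: finvK; rewrite qpoch0 oner_neq0. Qed.

Lemma AS m : A m.+1 = A m * (1 - qpow m.+1).
Proof. by []. Qed.

Lemma A0 : A 0 = 1. Proof. by []. Qed.
Lemma I0 : I 0 = 1.
Proof. by have := IA 0; rewrite A0 mulr1. Qed.

Lemma gaussE m j : (j <= m)%N -> (gauss m j : F) = A m * (I j * I (m - j)%N).
Proof. by move=> H; rewrite /gauss H. Qed.

Lemma gaussN m j : (m < j)%N -> (gauss m j : F) = 0.
Proof. by move=> H; rewrite /gauss leqNgt H. Qed.

Lemma gauss0 m : (gauss m 0 : F) = 1.
Proof. by rewrite gaussE // I0 subn0 mul1r mulrC IA. Qed.

Lemma gaussmm m : (gauss m m : F) = 1.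
Proof. by rewrite gaussE // subnn I0 mulr1 mulrC IA. Qed.

Lemma pascal0 i k :
  (gauss (i + k).+2 i.+1 : F) =
  gauss (i + k).+1 i.+1 + (qpow k.+1 : F) * gauss (i + k).+1 i.
Proof.
rewrite !gaussE; last first.
- lia.
- lia.
- lia.
have -> : ((i + k).+2 - i.+1 = k.+1)%N by lia.
have -> : ((i + k).+1 - i.+1 = k)%N by lia.
have -> : ((i + k).+1 - i = k.+1)%N by lia.
set m := (i + k).+1.
rewrite AS.
have -> : m.+1 = (i.+1 + k.+1)%N by rewrite /m; lia.
rewrite qpowD.
set B := A m. set ia := I i.+1. set ic := I k.+1. set ja := I i. set jc := I k.
set a := A i. set c := A k. set qa := (qpow i.+1 : F). set qc := (qpow k.+1 : F).
have h1 : ia * (a * (1 - qa)) = 1 by rewrite -AS IA.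
have h2 : ic * (c * (1 - qc)) = 1 by rewrite -AS IA.
have h3 : ja * a = 1 by rewrite IA.
have h4 : jc * c = 1 by rewrite IA.
have E : B * (ia * jc) + qc * (B * (ja * ic)) - B * (1 - qa * qc) * (ia * ic) =
  B * ia * jc * (1 - ic * (c * (1 - qc))) + B * ia * ic * (1 - qc) * (jc * c - 1)
  + qc * B * ja * ic * (1 - ia * (a * (1 - qa)))
  + qc * B * ia * ic * (1 - qa) * (ja * a - 1) by ring.
move: E; rewrite h1 h2 h3 h4 !subrr !mulr0 !addr0 => /eqP.
by rewrite subr_eq0 => /eqP ->.
Qed.

Lemma pascal m i : (i <= m)%N ->
  (gauss m.+1 i.+1 : F) = gauss m i.+1 + (qpow (m - i) : F) * gauss m i.
Proof.
rewrite leq_eqVlt => /orP [/eqP ->|H].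
  by rewrite gaussmm gaussN // subnn qpow0 gaussmm add0r mul1r.
have -> : m = (i + (m - i.+1)).+1 by lia.
have -> : ((i + (m - i.+1)).+1 - i = (m - i.+1).+1)%N by lia.
exact: pascal0.
Qed.

Definition Pm m : F := \sum_(j < m.+1) (qpow 'C(j, 2) : F) * gauss m j.

Lemma PS m : Pm m.+1 = (1 + qpow m) * Pm m.
Proof.
rewrite /Pm big_ord_recl gauss0.
under eq_bigr => i _ do rewrite lift0 (pascal (ltnSE (ltn_ord i))) mulrDr.
rewrite big_split /= addrA mulrDl mul1r.
congr (_ + _).
  rewrite [in RHS]big_ord_recl gauss0 big_ord_recr /= gaussN // mulr0 addr0.
  congr (_ + _); apply: eq_bigr => i _; done.
rewrite mulr_sumr; apply: eq_bigr => i _.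
rewrite mulrA -!qpowD [RHS]mulrA -qpowD; congr (qpow _ * _).
have Hi := ltn_ord i.
rewrite binS bin1 /bump /=; lia.
Qed.

Lemma subF (f g : F) n : (f - g) n = f n - g n. Proof. by []. Qed.
Lemma addF (f g : F) n : (f + g) n = f n + g n. Proof. by []. Qed.

Definition Cf m d : F := fun n => (cnt m d n)%:R.

Lemma natr_if (b : bool) (x : nat) : ((if b then x else 0%N)%:R : rat) = if b then x%:R else 0.
Proof. by case: b. Qed.

Lemma Crec m d : (1 - qpow m.+1 : F) * Cf m.+1 d =
  (qpow m : F) * Cf m true + (qpow (av d false + (av d false).+1 * m) : F) * Cf m true.
Proof.
apply: fext => n; rewrite mulrBl mul1r subF addF !qpowM_coef /Cf cnt_rec /pc av_true.
rewrite add0n mul1n !natrD !natr_if addrK.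
by case: ifP; case: ifP.
Qed.

Lemma Cf0 d : Cf 0 d = 1.
Proof. by apply: fext => n; rewrite /Cf cnt0. Qed.

Lemma Pm0 : Pm 0 = 1.
Proof. by rewrite /Pm big_ord1 gauss0 qpow0 mulr1. Qed.

Lemma binS2 m : 'C(m.+1, 2) = ('C(m, 2) + m)%N.
Proof. by rewrite binS bin1. Qed.

Lemma YP m : (qpow 'C(m, 2) : F) * Pm m.+1 = 2%:R * (A m * Cf m true).
Proof.
elim: m => [|m IH].
  by rewrite PS Pm0 A0 Cf0 qpow0 mulr1 !mul1r; ring.
have HC := Crec m true.
rewrite /av /= addnC in HC.
rewrite PS binS2 qpowD.
have -> : (qpow 'C(m, 2) : F) * qpow m * ((1 + qpow m.+1) * Pm m.+1) =
          (qpow m : F) * (1 + qpow m.+1) * (qpow 'C(m, 2) * Pm m.+1) by ring.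
rewrite IH AS.
have -> : 2%:R * (A m * (1 - qpow m.+1) * Cf m.+1 true) =
          2%:R * A m * ((1 - qpow m.+1) * Cf m.+1 true) by ring.
rewrite HC (_ : (2 * m + 1 = m + m.+1)%N); last by lia.
rewrite qpowD; ring.
Qed.

Lemma rhsE m : rhs_term m = (qpow 'C(m.+1, 2) : F) * (I m * Pm m).
Proof.
rewrite /rhs_term; congr fmul; congr fmul.
by apply: fext => n; rewrite /Pm sumF.
Qed.

Lemma Gm m : rhs_term m = (qpow m : F) * Cf m false.
Proof.
rewrite rhsE; case: m => [|m].
  by rewrite Cf0 Pm0 I0 qpow0 !mulr1.
rewrite -[RHS]mul1r -(IA m.+1) AS.
have HC := Crec m false.
rewrite /av /= add0n mul1n in HC.
have -> : I m.+1 * (A m * (1 - qpow m.+1)) * ((qpow m.+1 : F) * Cf m.+1 false) =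
   I m.+1 * qpow m.+1 * A m * ((1 - qpow m.+1) * Cf m.+1 false) by ring.
rewrite HC binS2 binS2 -addnA qpowD.
have -> : (qpow 'C(m, 2) : F) * qpow (m + m.+1) * (I m.+1 * Pm m.+1) =
   I m.+1 * qpow (m + m.+1) * (qpow 'C(m, 2) * Pm m.+1) by ring.
rewrite YP qpowD; ring.
Qed.

Lemma uniq_flatten_key (T : eqType) (f : nat -> seq T) (key : T -> nat) (s : seq nat) :
  uniq s -> (forall x, x \in s -> uniq (f x)) ->
  (forall x y, x \in s -> y \in f x -> key y = x) -> uniq (flatten (map f s)).
Proof.
elim: s => //= x s IH /andP [Hx Us] Hu Hk.
rewrite cat_uniq Hu ?mem_head // IH //; last first.
- by move=> z y Hz; apply: Hk; rewrite in_cons Hz orbT.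
- by move=> z Hz; apply: Hu; rewrite in_cons Hz orbT.
rewrite andbT; apply/hasPn => y /flatten_mapP [z Hz Hy].
apply/negP => Hy'.
have E1 : key y = z by apply: Hk Hy; rewrite in_cons Hz orbT.
have E2 := Hk x y (mem_head _ _) Hy'.
by move: Hx; rewrite -E2 E1 Hz.
Qed.

Definition gg (r : seq part) := rev (sh 1 r).
Lemma gg_inj : injective gg.
Proof. by move=> r r' H; have := congr1 rev H; rewrite /gg !revK => /sh_inj. Qed.

Definition LL N := flatten [seq map gg (E N m false (N - m)) | m <- iota 0 N.+1].

Lemma weight_rev s : weight (rev s) = weight s.
Proof. by rewrite /weight map_rev sumn_rev. Qed.

Theorem mainTheorem17 :
  forall N : nat, exists L : seq (seq part),
    [/\ uniq L,
        (forall s : seq part, (s \in L) = inC2 s && (weight s == N)) &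
        forall M : nat, (N <= M)%N -> (size L)%:R = rhs_partial M N].
Proof.
move=> N; exists (LL N); split.
- apply: (uniq_flatten_key (key := size)); first exact: iota_uniq.
    move=> x; rewrite mem_iota => Hx; rewrite map_inj_uniq ?E_uniq //; last exact: gg_inj.
    lia.
  move=> x y; rewrite mem_iota => Hx /mapP [r]; rewrite E_spec; last by lia.
  by move=> /and3P [_ /eqP H _] ->; rewrite size_rev size_sh.
- move=> s; apply/flatten_mapP/idP.
    move=> [m]; rewrite mem_iota => Hm /mapP [r]; rewrite E_spec; last by lia.
    move=> /and3P [H1 /eqP H2 /eqP H3] ->.
    rewrite inC2_rev /gg revK rvalid_sh0 H1 /= weight_rev weight_sh H2 H3.
    apply/eqP; lia.
  move=> /andP [Hc /eqP Hw].
  rewrite inC2_rev in Hc.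
  have Ht := sh_ush (rvalid_ge Hc).
  have Hwg := weight_ge (rvalid_ge Hc).
  exists (size s).
    rewrite mem_iota /=; move: Hwg; rewrite weight_rev size_rev; rewrite Hw mul1n add0n ltnS; exact.
  apply/mapP; exists (ush 1 (rev s)); last by rewrite /gg Ht revK.
  rewrite E_spec; last by move: Hwg; rewrite weight_rev size_rev Hw mul1n => H; rewrite subnK.
  have Hs : size (ush 1 (rev s)) = size s by rewrite size_ush size_rev.
  move: (ush 1 (rev s)) Ht Hs => u Ht Hs.
  move: Hc Hw; rewrite -weight_rev -Ht rvalid_sh0 weight_sh Hs mul1n => -> <-.
  by rewrite eqxx /= addnK.
move=> M HM.
rewrite /rhs_partial /LL size_flatten /shape -map_comp sumnE big_map.
rewrite natr_sum.
have -> : \sum_(i <- iota 0 N.+1) ((size \o (fun m => [seq gg i | i <- E N m false (N - m)])) i)%:R =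
          \sum_(m < N.+1) (Cf m false (N - m)%N : rat).
  rewrite -(big_mkord xpredT (fun m => Cf m false (N - m)%N)) /index_iota subn0.
  apply: eq_big_seq => m; rewrite mem_iota add0n ltnS => /= Hm.
  by rewrite size_map /Cf E_size // subnK.
rewrite (big_ord_widen M.+1 (fun m => Cf m false (N - m)%N) (_ : N.+1 <= M.+1)%N) //.
rewrite big_mkcond /=; apply: eq_bigr => i _.
by rewrite Gm qpowM_coef ltnS.
Qed.
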